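(* Let $H$ be a finite-dimensional real Hilbert space, $A\in B(H,H)$ symmetric with $\|A^{1/2}\mathbf{u}\|^2\ge\ell_0\|\mathbf{u}\|^2$ for all $\mathbf{u}$ ($\ell_0>0$), $\mathbf{N}:H\to H$ locally Lipschitz with $\mathbf{N}(\mathbf{u})\cdot\mathbf{u}=0$ for all $\mathbf{u}$, $\mathbf{F}\in H$ constant, and $\gamma>0$. For $k\in(0,1]$ let $\mathbb{S}_k$ be the map on $(H\times H)\times\mathbb{R}^2$ given by $\mathbb{S}_k((\mathbf{u}_0,\mathbf{u}_1),(q_0,q_1))=((\mathbf{u}_1,\mathbf{u}_2),(q_1,q_2))$, where $(\mathbf{u}_2,q_2)$ is the unique solution of $$\frac{3\mathbf{u}_2-4\mathbf{u}_1+\mathbf{u}_0}{2k}+A\mathbf{u}_2+q_2\mathbf{N}(2\mathbf{u}_1-\mathbf{u}_0)=\mathbf{F},\qquad \frac{3q_2-4q_1+q_0}{2k}+\gamma q_2-\mathbf{N}(2\mathbf{u}_1-\mathbf{u}_0)\cdot\mathbf{u}_2=\gamma,$$ and let $\mathscr{A}_k$ be the global attractor of the discrete dynamical system generated by $\mathbb{S}_k$. Then there exists a constant $C>0$ independent of $k$ such that $$\|\mathbf{u}_1-\mathbf{u}_2\|+|q_1-q_2|\le Ck\qquad\text{for all }((\mathbf{u}_1,\mathbf{u}_2),(q_1,q_2))\in\mathscr{A}_k\text{ and all }k.$$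
   Context: A global attractor of a discrete dynamical system is a compact invariant set attracting all bounded sets; $\mathbb{S}_k$ possesses one under the stated assumptions. *)

(* Defs.v *)
From HB Require Import structures.
From Stdlib Require Import ClassicalEpsilon.
From mathcomp Require Import all_boot all_order all_algebra.
From mathcomp Require Import all_classical all_reals all_analysis.
Set Implicit Arguments. Unset Strict Implicit. Unset Printing Implicit Defensive.
Import Order.TTheory GRing.Theory Num.Theory.
Import numFieldNormedType.Exports.
Local Open Scope ring_scope.

(* The finite-dimensional real Hilbert space H is modelled as R^n = 'rV[R]_n
   with the Euclidean inner product. *)
Definition dot {R : realType} {n : nat} (u v : 'rV[R]_n) : R := (u *m v^T) 0 0.
Definition hnorm {R : realType} {n : nat} (u : 'rV[R]_n) : R := Num.sqrt (dot u u).

Definition app {R : realType} {n : nat} (A : 'M[R]_n) (u : 'rV[R]_n) : 'rV[R]_n :=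
  u *m A^T.

Definition locally_lipschitz {R : realType} {n : nat} (N : 'rV[R]_n -> 'rV[R]_n) :=
  forall r : R, exists L : R, forall u v : 'rV[R]_n,
    hnorm u <= r -> hnorm v <= r -> hnorm (N u - N v) <= L * hnorm (u - v).

Notation state R n := (('rV[R]_n * 'rV[R]_n) * (R * R))%type.

Definition scheme_eq {R : realType} {n : nat} (A : 'M[R]_n)
  (N : 'rV[R]_n -> 'rV[R]_n) (F : 'rV[R]_n) (gamma k : R)
  (u0 u1 : 'rV[R]_n) (q0 q1 : R) (u2 : 'rV[R]_n) (q2 : R) : Prop :=
  let w := 2%:R *: u1 - u0 in
  (2%:R * k)^-1 *: (3%:R *: u2 - 4%:R *: u1 + u0) + app A u2 + q2 *: N w = F /\
  (3%:R * q2 - 4%:R * q1 + q0) / (2%:R * k) + gamma * q2 - dot (N w) u2 = gamma.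

Definition scheme_sol {R : realType} {n : nat} (A : 'M[R]_n)
  (N : 'rV[R]_n -> 'rV[R]_n) (F : 'rV[R]_n) (gamma k : R)
  (u0 u1 : 'rV[R]_n) (q0 q1 : R) : ('rV[R]_n * R)%type :=
  epsilon (inhabits (0, 0))
    (fun p : 'rV[R]_n * R => scheme_eq A N F gamma k u0 u1 q0 q1 p.1 p.2).

Definition Sk {R : realType} {n : nat} (A : 'M[R]_n)
  (N : 'rV[R]_n -> 'rV[R]_n) (F : 'rV[R]_n) (gamma k : R)
  (x : state R n) : state R n :=
  let u0 := x.1.1 in let u1 := x.1.2 in let q0 := x.2.1 in let q1 := x.2.2 in
  let p := scheme_sol A N F gamma k u0 u1 q0 q1 in
  ((u1, p.1), (q1, p.2)).

Definition snorm {R : realType} {n : nat} (x : state R n) : R :=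
  hnorm x.1.1 + hnorm x.1.2 + `|x.2.1| + `|x.2.2|.

Definition sdist {R : realType} {n : nat} (x y : state R n) : R :=
  hnorm (x.1.1 - y.1.1) + hnorm (x.1.2 - y.1.2)
  + `|x.2.1 - y.2.1| + `|x.2.2 - y.2.2|.

Definition sbounded {R : realType} {n : nat} (B : set (state R n)) : Prop :=
  exists M : R, forall x, B x -> snorm x <= M.

(* global attractor of the discrete dynamical system generated by S :
   a compact invariant set attracting all bounded sets (the Hausdorff
   semidistance dist(S^m B, Att) tends to 0 for every bounded B). *)
Definition global_attractor {R : realType} {n : nat}
  (S : state R n -> state R n) (Att : set (state R n)) : Prop :=
  compact Att /\
  (S @` Att = Att)%classic /\
  forall B : set (state R n), sbounded B ->
    forall eps : R, 0 < eps -> exists m0 : nat, forall m : nat, (m0 <= m)%N ->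
      forall x, B x -> exists2 a, Att a & sdist (iter m S x) a < eps.

(* Main.v *)
Require Import Defs.
From Stdlib Require Import ClassicalEpsilon.
From mathcomp Require Import all_boot all_order all_algebra.
From mathcomp Require Import all_classical all_reals all_analysis.
From mathcomp Require Import ring lra.
Import Order.TTheory GRing.Theory Num.Theory.
Import numFieldNormedType.Exports.
Local Open Scope ring_scope.
Lemma contract_bound (R : realType) (T : Type) (Att : set T) (S : T -> T)
  (V : T -> R) (a b : R) :
  0 < a -> (exists M, forall x, Att x -> V x <= M) ->
  (forall y, Att y -> exists x, Att x /\ S x = y) ->
  (forall x, Att x -> V (S x) * (1 + a) <= V x + b) ->
  forall y, Att y -> V y <= b / a.
Proof.
move=> a0 [M HM] Hsurj Hstep y Ay.
set E := [set V x | x in Att]%classic.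
have hE : has_ubound E by exists M => _ [x Ax <-]; exact: HM.
have ne : (E !=set0)%classic by exists (V y), y.
have ub := ub_le_sup hE.
have Hs : sup E * (1 + a) <= sup E + b.
  rewrite -ler_pdivlMr; last lra.
  apply: ge_sup => // _ [z Az <-].
  have [x [Ax <-]] := Hsurj z Az.
  rewrite ler_pdivlMr; last lra.
  apply: le_trans (Hstep x Ax) _. rewrite lerD2r. apply: ub. by exists x.
have Vy : V y <= sup E by apply: ub; exists y.
rewrite ler_pdivlMr //. 
have : V y * a <= sup E * a by rewrite ler_pM2r.
lra.
Qed.

Section Dot.
Context {R : realType} {n : nat}.
Implicit Types (u v w : 'rV[R]_n).

Lemma dotE u v : dot u v = \sum_j u 0 j * v 0 j.
Proof. by rewrite /dot mxE; apply: eq_bigr => j _; rewrite mxE. Qed.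

Lemma dotC u v : dot u v = dot v u.
Proof. by rewrite !dotE; apply: eq_bigr => j _; rewrite mulrC. Qed.

Lemma dotDl u v w : dot (u + v) w = dot u w + dot v w.
Proof. by rewrite !dotE -big_split; apply: eq_bigr => j _; rewrite mxE mulrDl. Qed.

Lemma dotZl (a : R) u w : dot (a *: u) w = a * dot u w.
Proof. by rewrite !dotE mulr_sumr; apply: eq_bigr => j _; rewrite mxE mulrA. Qed.

Lemma dotNl u w : dot (- u) w = - dot u w.
Proof. by rewrite -scaleN1r dotZl mulN1r. Qed.

Lemma dotBl u v w : dot (u - v) w = dot u w - dot v w.
Proof. by rewrite dotDl dotNl. Qed.

Lemma dotDr u v w : dot w (u + v) = dot w u + dot w v.
Proof. by rewrite dotC dotDl !(dotC w). Qed.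
Lemma dotZr (a : R) u w : dot w (a *: u) = a * dot w u.
Proof. by rewrite dotC dotZl dotC. Qed.
Lemma dotBr u v w : dot w (u - v) = dot w u - dot w v.
Proof. by rewrite dotC dotBl !(dotC w). Qed.
Lemma dotNr u w : dot w (- u) = - dot w u.
Proof. by rewrite dotC dotNl dotC. Qed.
Lemma dot0l w : dot 0 w = 0.
Proof. by rewrite -(scale0r 0) dotZl mul0r. Qed.

Lemma dot_ge0 u : 0 <= dot u u.
Proof. by rewrite dotE; apply: sumr_ge0 => j _; rewrite -expr2 sqr_ge0. Qed.

Lemma dot_eq0 u : dot u u = 0 -> u = 0.
Proof.
rewrite dotE => /eqP; rewrite psumr_eq0; last by move=> j _; rewrite -expr2 sqr_ge0.
move=> /allP H; apply/rowP => j; rewrite mxE.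
have := H j (mem_index_enum j); rewrite /= -expr2 sqrf_eq0.
by move/eqP.
Qed.

Lemma entry_le_dot u j : u 0 j ^+ 2 <= dot u u.
Proof.
rewrite dotE (bigD1 j) //= -expr2 lerDl.
by apply: sumr_ge0 => i _; rewrite -expr2 sqr_ge0.
Qed.

End Dot.

Section Norm.
Context {R : realType}.

Lemma mentry_le_norm {m n} (B : 'M[R]_(m, n)) i j : `|B i j| <= `|B|.
Proof. by rewrite [leRHS]/Num.Def.normr /= mx_normrE; apply/bigmax_geP; right; exists (i, j). Qed.

Lemma norm_le_entries {n} (u : 'rV[R]_n) c : 0 <= c -> (forall j, `|u 0 j| <= c) -> `|u| <= c.
Proof.
move=> c0 H; rewrite /Num.Def.normr /= mx_normrE; apply: bigmax_le => // -[i j] _ /=.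
by rewrite (ord1 i); exact: H.
Qed.

Lemma norm_le_hnorm {n} (u : 'rV[R]_n) : `|u| <= hnorm u.
Proof.
apply: norm_le_entries; first exact: sqrtr_ge0.
move=> j; rewrite -sqrtr_sqr; apply: ler_wsqrtr.
exact: entry_le_dot.
Qed.

Lemma sum_const_le {n} (f : 'I_n -> R) c : (forall j, f j <= c) -> \sum_j f j <= n%:R * c.
Proof.
move=> H; apply: le_trans (ler_sum _ (fun j _ => H j)) _.
by rewrite sumr_const card_ord mulr_natl.
Qed.

Lemma dot_le_norm {n} (u : 'rV[R]_n) : dot u u <= n%:R * `|u| ^+ 2.
Proof.
rewrite dotE; apply: sum_const_le => j.
rewrite -expr2 -real_normK ?num_real //; apply: lerXn2r; rewrite ?nnegrE //.
exact: mentry_le_norm.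
Qed.

Lemma hnorm_le_norm {n} (u : 'rV[R]_n) : hnorm u <= Num.sqrt n%:R * `|u|.
Proof.
rewrite /hnorm -(ger0_norm (normr_ge0 u)) -sqrtr_sqr -sqrtrM ?ler0n //.
apply: ler_wsqrtr; exact: dot_le_norm.
Qed.

Lemma dot_abs_le {n} (a b : 'rV[R]_n) : `|dot a b| <= n%:R * (`|a| * `|b|).
Proof.
rewrite dotE; apply: le_trans (ler_norm_sum _ _ _) _; apply: sum_const_le => j.
by rewrite normrM; apply: ler_pM => //; exact: mentry_le_norm.
Qed.

Lemma mul_norm_le {n} (u : 'rV[R]_n) (B : 'M[R]_n) : `|u *m B| <= n%:R * (`|u| * `|B|).
Proof.
apply: norm_le_entries; first by rewrite mulr_ge0 // mulr_ge0.
move=> j; rewrite mxE; apply: le_trans (ler_norm_sum _ _ _) _; apply: sum_const_le => i.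
by rewrite normrM; apply: ler_pM => //; exact: mentry_le_norm.
Qed.

End Norm.

Lemma scheme_solvable (R : realType) (n : nat) (A : 'M[R]_n) (l0 : R)
  (N : 'rV[R]_n -> 'rV[R]_n) (F : 'rV[R]_n) (gamma k : R) u0 u1 q0 q1 :
  0 < k -> 0 < gamma -> 0 < l0 ->
  (forall u : 'rV[R]_n, dot u (app A u) >= l0 * dot u u) ->
  exists p : 'rV[R]_n * R, scheme_eq A N F gamma k u0 u1 q0 q1 p.1 p.2.
Proof.
move=> k0 g0 l00 HA.
set w := 2%:R *: u1 - u0; set Nw := N w.
set a := 3%:R / (2%:R * k).
have a0 : 0 < a by rewrite /a divr_gt0 // mulr_gt0.
set c := a + gamma.
have c0 : 0 < c by rewrite /c addr_gt0.
set beta := gamma + (4%:R * q1 - q0) / (2%:R * k).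
set P : 'M[R]_n := a%:M + A^T + c^-1 *: (Nw^T *m Nw).
have HP : forall v, v *m P = a *: v + app A v + (c^-1 * dot v Nw) *: Nw.
  move=> v; rewrite /P !mulmxDr mul_mx_scalar -scalemxAr mulmxA.
  by rewrite [v *m Nw^T]mx11_scalar mul_scalar_mx scalerA.
have Pu : P \in unitmx.
  rewrite -row_free_unit; apply: inj_row_free => v Hv.
  apply: dot_eq0.
  have := congr1 (fun x => dot x v) (HP v).
  rewrite Hv dot0l !dotDl !dotZl [dot (app A v) v]dotC [dot Nw v]dotC => E.
  have h1 := HA v.
  have h2 := dot_ge0 v.
  have h3 : 0 <= c^-1 * dot v Nw * dot v Nw.
    by rewrite -mulrA mulr_ge0 // ?invr_ge0 ?(ltW c0) // -expr2 sqr_ge0.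
  have h4 : 0 <= l0 * dot v v by rewrite mulr_ge0 // ltW.
  have h5 : a * dot v v <= 0 by lra.
  apply/le_anti; rewrite h2 andbT.
  by rewrite -(pmulr_rle0 _ a0).
set b := F + (2%:R * k)^-1 *: (4%:R *: u1 - u0) - (beta / c) *: Nw.
set u2 := b *m invmx P.
have Hu2 : u2 *m P = b by rewrite /u2 mulmxKV.
clearbody u2.
set q2 := (beta + dot Nw u2) / c.
exists (u2, q2); split => /=; rewrite -/w -/Nw.
- have E := Hu2; rewrite HP in E.
  apply/rowP => j; have := congr1 (fun v : 'rV[R]_n => v 0 j) E.
  rewrite /q2 [dot Nw u2]dotC.
  set X := app A u2; set d := dot u2 Nw.
  rewrite /b /a !mxE => E'.
  move: E'; set S := (\sum_j0 _); move=> E'.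
  have -> : F 0 j = 3 / (2 * k) * u2 0 j + S + c^-1 * d * Nw 0 j
     - (2 * k)^-1 * (4 * u1 0 j - u0 0 j) + beta / c * Nw 0 j by rewrite E'; ring.
  ring.
- rewrite /q2 /c /a /beta; field.
  apply/andP; split; first by rewrite gt_eqF.
  by rewrite gt_eqF // addr_gt0 // mulr_gt0 // mulr_gt0.
Qed.
Lemma energy_real (R : realType) (k l0 g mu a b c e21 e20 e10 aA fu ff nu q0 q1 q2 : R) :
  0 < k -> k <= 1 -> 0 < l0 -> 0 < g -> 0 < mu -> mu <= l0 -> mu <= g ->
  (2 * k)^-1 * (3 * a - 4 * e21 + e20) + aA + q2 * nu = fu ->
  (3 * q2 - 4 * q1 + q0) / (2 * k) + g * q2 - nu = g ->
  l0 * a <= aA ->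
  0 <= a + 4 * b + c - 4 * e21 + 2 * e20 - 4 * e10 ->
  0 <= l0 ^+ 2 * a - 2 * l0 * fu + ff ->
  0 <= 4 * a + 4 * e21 + b ->
  0 <= a -> 0 <= b ->
  (a + (4 * a - 4 * e21 + b) + q2 ^+ 2 + (2 * q2 - q1) ^+ 2 + k * mu * (a + q2 ^+ 2))
    * (1 + k * (mu / (9 + mu)))
  <= (b + (4 * b - 4 * e10 + c) + q1 ^+ 2 + (2 * q1 - q0) ^+ 2 + k * mu * (b + q1 ^+ 2))
     + k * (2 * ff / l0 + 2 * g).
Proof.
move=> k0 k1 l00 g0 mu0 mul mug H1 H2 H3 H4 H5 H6 a0 b0.
have kn0 : k != 0 by rewrite gt_eqF.
have l0n0 : l0 != 0 by rewrite gt_eqF.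
have S1 : 3 * a - 4 * e21 + e20 = 2 * k * (fu - aA - q2 * nu).
  by rewrite -H1; field.
have Hnu : nu = (3 * q2 - 4 * q1 + q0) / (2 * k) + g * q2 - g by lra.
have S2 : 3 * q2 - 4 * q1 + q0 = 2 * k * (g - g * q2 + nu).
  by rewrite Hnu; field.
have S2' : (3 * q2 - 4 * q1 + q0) * q2 = 2 * k * (g - g * q2 + nu) * q2 by rewrite S2.
have P1 : 0 <= k * (aA - l0 * a) by rewrite mulr_ge0 ?subr_ge0 // ltW.
have P2 : 0 <= 2 * k * l0 * a - 4 * k * fu + 2 * k * ff / l0.
  have -> : 2 * k * l0 * a - 4 * k * fu + 2 * k * ff / l0
      = (2 * k / l0) * (l0 ^+ 2 * a - 2 * l0 * fu + ff) by field.
  by rewrite mulr_ge0 // divr_ge0 // ?mulr_ge0 // ltW.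
have P3 : 0 <= k * g * (q2 - 1) ^+ 2 by rewrite mulr_ge0 ?sqr_ge0 // mulr_ge0 // ltW.
have P4 : 0 <= (q2 - 2 * q1 + q0) ^+ 2 by rewrite sqr_ge0.
set E' := a + (4 * a - 4 * e21 + b) + q2 ^+ 2 + (2 * q2 - q1) ^+ 2.
set E := b + (4 * b - 4 * e10 + c) + q1 ^+ 2 + (2 * q1 - q0) ^+ 2.
have Key : E' - E + 2 * k * l0 * a + 2 * k * g * q2 ^+ 2 <= k * (2 * ff / l0 + 2 * g).
  rewrite /E' /E. lra.
have P5 : 0 <= (2 * q2 + q1) ^+ 2 by rewrite sqr_ge0.
have q10 : 0 <= q1 ^+ 2 by rewrite sqr_ge0.
have q20 : 0 <= q2 ^+ 2 by rewrite sqr_ge0.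
have Ep : E' <= 9 * a + 2 * b + 9 * q2 ^+ 2 + 2 * q1 ^+ 2 by rewrite /E'; lra.
have M1 : k * mu * a <= k * l0 * a.
  by rewrite ler_wpM2r // ler_wpM2l // ltW.
have M2 : k * mu * q2 ^+ 2 <= k * g * q2 ^+ 2.
  by rewrite ler_wpM2r // ler_wpM2l // ltW.
have M3 : k * mu * (a + q2 ^+ 2) <= mu * (a + q2 ^+ 2).
  rewrite -mulrA ler_piMl //; apply: mulr_ge0; [exact: ltW | lra].
have M4 : 0 <= mu * b by rewrite mulr_ge0 // ltW.
have M5 : 0 <= mu * q1 ^+ 2 by rewrite mulr_ge0 // ltW.
set P := a + b + q1 ^+ 2 + q2 ^+ 2.
set V' := E' + k * mu * (a + q2 ^+ 2).
have VP : V' <= (9 + mu) * P by rewrite /V' /P; lra.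
have th0 : 0 <= mu / (9 + mu) by apply: divr_ge0; lra.
have T : k * (mu / (9 + mu)) * V' <= k * mu * P.
  rewrite -mulrA -[k * mu * P]mulrA ler_wpM2l ?(ltW k0) //.
  apply: le_trans (ler_wpM2l th0 VP) _.
  rewrite mulrA mulfVK //; last by rewrite gt_eqF // addr_gt0.
have : V' * (1 + k * (mu / (9 + mu))) = V' + k * (mu / (9 + mu)) * V' by ring.
move=> ->.
rewrite /V' /P in T *. lra.
Qed.

Definition Vfun {R : realType} {n : nat} (k mu : R) (x : state R n) : R :=
  dot x.1.2 x.1.2 + dot (2%:R *: x.1.2 - x.1.1) (2%:R *: x.1.2 - x.1.1)
  + x.2.2 ^+ 2 + (2%:R * x.2.2 - x.2.1) ^+ 2 + k * mu * (dot x.1.2 x.1.2 + x.2.2 ^+ 2).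

Lemma energy_vec (R : realType) (n : nat) (A : 'M[R]_n) (l0 : R)
  (N : 'rV[R]_n -> 'rV[R]_n) (F : 'rV[R]_n) (gamma k mu : R) u0 u1 q0 q1 u2 q2 :
  0 < k -> k <= 1 -> 0 < l0 -> 0 < gamma -> 0 < mu -> mu <= l0 -> mu <= gamma ->
  (forall u : 'rV[R]_n, dot u (app A u) >= l0 * dot u u) ->
  scheme_eq A N F gamma k u0 u1 q0 q1 u2 q2 ->
  Vfun k mu ((u1, u2), (q1, q2)) * (1 + k * (mu / (9 + mu)))
  <= Vfun k mu ((u0, u1), (q0, q1)) + k * (2 * dot F F / l0 + 2 * gamma).
Proof.
move=> k0 k1 l00 g0 mu0 mul mug HA [Hu Hq].
set Nw := N (2%:R *: u1 - u0) in Hu Hq.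
have H1 := congr1 (fun v => dot v u2) Hu.
rewrite /= !(dotDl, dotBl, dotZl, dotNl) in H1.
rewrite (dotC u1 u2) (dotC u0 u2) (dotC (app A u2) u2) in H1.
have H3 := HA u2.
have H4 := dot_ge0 (u2 - 2%:R *: u1 + u0).
rewrite !(dotDl, dotBl, dotZl, dotNl, dotDr, dotBr, dotZr, dotNr) in H4.
rewrite (dotC u1 u2) (dotC u0 u2) (dotC u0 u1) in H4.
have H5 := dot_ge0 (l0 *: u2 - F).
rewrite !(dotDl, dotBl, dotZl, dotNl, dotDr, dotBr, dotZr, dotNr) in H5.
rewrite (dotC u2 F) in H5.
have H6 := dot_ge0 (2%:R *: u2 + u1).
rewrite !(dotDl, dotBl, dotZl, dotNl, dotDr, dotBr, dotZr, dotNr) in H6.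
rewrite (dotC u1 u2) in H6.
have a0 := dot_ge0 u2.
have b0 := dot_ge0 u1.
have H5' : 0 <= l0 ^+ 2 * dot u2 u2 - 2 * l0 * dot F u2 + dot F F by lra.
have H4' : 0 <= dot u2 u2 + 4 * dot u1 u1 + dot u0 u0 - 4 * dot u2 u1
   + 2 * dot u2 u0 - 4 * dot u1 u0 by lra.
have H6' : 0 <= 4 * dot u2 u2 + 4 * dot u2 u1 + dot u1 u1 by lra.
have := @energy_real R k l0 gamma mu _ _ _ _ _ _ _ _ _ _ _ _ _ k0 k1 l00 g0 mu0 mul mug H1 Hq H3 H4' H5' H6' a0 b0.
rewrite /Vfun /=.
rewrite !(dotDl, dotBl, dotZl, dotNl, dotDr, dotBr, dotZr, dotNr).
rewrite (dotC u1 u2) (dotC u0 u1).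
lra.
Qed.

Lemma Nbound (R : realType) (n : nat) (N : 'rV[R]_n -> 'rV[R]_n) (w : 'rV[R]_n) (L B : R) :
  0 <= B -> hnorm (N w - N 0) <= L * hnorm (w - 0) -> hnorm w <= B ->
  `|N w| <= `|L| * B + `|N 0|.
Proof.
move=> B0 HL hw; rewrite subr0 in HL.
have e : N w = (N w - N 0) + N 0 by rewrite subrK.
rewrite {1}e; apply: le_trans (ler_normD _ _) _; rewrite lerD2r.
apply: (le_trans (norm_le_hnorm (N w - N 0))); apply: le_trans HL _.
have h0 : 0 <= hnorm w by exact: sqrtr_ge0.
apply: le_trans (ler_wpM2r h0 (ler_norm L)) _.
by apply: ler_wpM2l.
Qed.

Lemma delta_u (R : realType) (n : nat) (A : 'M[R]_n)
  (N : 'rV[R]_n -> 'rV[R]_n) (F : 'rV[R]_n) (gamma k : R) u0 u1 q0 q1 u2 q2 (B L : R) :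
  0 < k -> 0 <= B ->
  scheme_eq A N F gamma k u0 u1 q0 q1 u2 q2 ->
  `|u2| <= B -> `|q2| <= B ->
  hnorm (N (2%:R *: u1 - u0) - N 0) <= L * hnorm (2%:R *: u1 - u0 - 0) ->
  hnorm (2%:R *: u1 - u0) <= B ->
  3 * `|u2 - u1| <= `|u1 - u0|
    + k * (2 * (`|F| + n%:R * (B * `|A^T|) + B * (`|L| * B + `|N 0|))).
Proof.
move=> k0 B0 [Hu _] hu2 hq2 HL hw.
have hN := @Nbound _ _ _ _ _ _ B0 HL hw.
move: HL hw hN Hu; set Nw := N (2%:R *: u1 - u0); move=> HL hw hN Hu.
set g := F - app A u2 - q2 *: Nw.
have E : 3%:R *: (u2 - u1) = (u1 - u0) + (2%:R * k) *: g.
  apply/rowP => j; have := congr1 (fun v : 'rV[R]_n => v 0 j) Hu.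
  rewrite /g !mxE => Ej.
  rewrite -Ej; field; by rewrite gt_eqF.
have E3 : `|3%:R *: (u2 - u1)| = 3 * `|u2 - u1| by rewrite normrZ ger0_norm.
have hg : `|g| <= `|F| + n%:R * (B * `|A^T|) + B * (`|L| * B + `|N 0|).
  apply: le_trans (ler_normB _ _) _.
  apply: le_trans (lerD (ler_normB _ _) (lexx _)) _.
  rewrite -addrA -addrA lerD2l.
  apply: lerD.
    apply: le_trans (mul_norm_le _ _) _.
    by rewrite ler_wpM2l // ler_wpM2r.
  rewrite normrZ; apply: ler_pM => //.
have k2 : 0 <= 2 * k by rewrite mulr_ge0 // ltW.
have hg2 := ler_wpM2l k2 hg.
rewrite -E3 E; apply: le_trans (ler_normD _ _) _.
rewrite normrZ ger0_norm //.
lra.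
Qed.

Lemma delta_q (R : realType) (n : nat) (A : 'M[R]_n)
  (N : 'rV[R]_n -> 'rV[R]_n) (F : 'rV[R]_n) (gamma k : R) u0 u1 q0 q1 u2 q2 (B L : R) :
  0 < k -> 0 <= B -> 0 < gamma ->
  scheme_eq A N F gamma k u0 u1 q0 q1 u2 q2 ->
  `|u2| <= B -> `|q2| <= B ->
  hnorm (N (2%:R *: u1 - u0) - N 0) <= L * hnorm (2%:R *: u1 - u0 - 0) ->
  hnorm (2%:R *: u1 - u0) <= B ->
  3 * `|q2 - q1| <= `|q1 - q0|
    + k * (2 * (gamma + gamma * B + n%:R * ((`|L| * B + `|N 0|) * B))).
Proof.
move=> k0 B0 g0 [_ Hq] hu2 hq2 HL hw.
have hN := @Nbound _ _ _ _ _ _ B0 HL hw.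
move: HL hw hN Hq; set Nw := N (2%:R *: u1 - u0); move=> HL hw hN Hq.
set d := dot Nw u2 in Hq *.
have hd : d = (3 * q2 - 4 * q1 + q0) / (2 * k) + gamma * q2 - gamma by lra.
have E : 3 * (q2 - q1) = (q1 - q0) + (2 * k) * (gamma - gamma * q2 + d).
  rewrite hd; field; by rewrite gt_eqF.
have hdb : `|d| <= n%:R * ((`|L| * B + `|N 0|) * B).
  apply: le_trans (dot_abs_le _ _) _.
  by rewrite ler_wpM2l // ler_pM.
have hh : `|gamma - gamma * q2 + d| <= gamma + gamma * B + n%:R * ((`|L| * B + `|N 0|) * B).
  apply: le_trans (ler_normD _ _) _; apply: lerD => //.
  apply: le_trans (ler_normB _ _) _.
  rewrite normrM (ger0_norm (ltW g0)) lerD2l.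
  by rewrite ler_wpM2l // ltW.
have k2 : 0 <= 2 * k by rewrite mulr_ge0 // ltW.
have hh2 := ler_wpM2l k2 hh.
have E3 : `|3 * (q2 - q1)| = 3 * `|q2 - q1| by rewrite normrM ger0_norm.
rewrite -E3 E; apply: le_trans (ler_normD _ _) _.
rewrite normrM (ger0_norm k2).
lra.
Qed.

Lemma Sk_spec (R : realType) (n : nat) (A : 'M[R]_n) (l0 : R)
  (N : 'rV[R]_n -> 'rV[R]_n) (F : 'rV[R]_n) (gamma k : R) (x : state R n) :
  0 < k -> 0 < gamma -> 0 < l0 ->
  (forall u : 'rV[R]_n, dot u (app A u) >= l0 * dot u u) ->
  scheme_eq A N F gamma k x.1.1 x.1.2 x.2.1 x.2.2
    (Sk A N F gamma k x).1.2 (Sk A N F gamma k x).2.2.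
Proof.
move=> k0 g0 l00 HA; rewrite /Sk /scheme_sol /=.
have [p Hp] := @scheme_solvable R n A l0 N F gamma k x.1.1 x.1.2 x.2.1 x.2.2 k0 g0 l00 HA.
exact (epsilon_spec _ (fun p0 : 'rV[R]_n * R => scheme_eq A N F gamma k x.1.1 x.1.2 x.2.1 x.2.2 p0.1 p0.2) (ex_intro _ p Hp)).
Qed.

Lemma state_norm_le (R : realType) (n : nat) (x : state R n) :
  [/\ `|x.1.1| <= `|x|, `|x.1.2| <= `|x|, `|x.2.1| <= `|x| & `|x.2.2| <= `|x|].
Proof.
have -> : `|x| = Num.max (Num.max `|x.1.1| `|x.1.2|) (Num.max `|x.2.1| `|x.2.2|) by [].
by split; rewrite !le_max lexx ?orbT.
Qed.

Lemma att_bounded (R : realType) (n : nat) (Att : set (state R n)) :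
  compact Att -> exists M, 0 <= M /\ forall x, Att x ->
  [/\ `|x.1.1| <= M, `|x.1.2| <= M, `|x.2.1| <= M & `|x.2.2| <= M].
Proof.
move=> cA; have [M [Mreal HM]] := compact_bounded cA.
have H := HM (`|M| + 1) (lt_le_trans (ltr_pwDr ltr01 (real_ler_norm Mreal)) (lexx _)).
exists (`|M| + 1); split; first by rewrite addr_ge0.
move=> x Ax; have Hx : `|x| <= `|M| + 1 by exact: H.
have [h1 h2 h3 h4] := @state_norm_le R n x.
split; exact: le_trans Hx.
Qed.

Lemma sqr_le (R : realType) (a b : R) : 0 <= a -> a <= b -> a ^+ 2 <= b ^+ 2.
Proof. by move=> a0 ab; rewrite !expr2 ler_pM. Qed.

Lemma Vbound (R : realType) (n : nat) (k mu M : R) (x : state R n) :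
  0 <= k -> k <= 1 -> 0 < mu -> 0 <= M ->
  `|x.1.1| <= M -> `|x.1.2| <= M -> `|x.2.1| <= M -> `|x.2.2| <= M ->
  Vfun k mu x <= (10 * n%:R + 10 + mu * (n%:R + 1)) * M ^+ 2.
Proof.
move=> k0 k1 mu0 M0 b1 b2 b3 b4.
have n0 : (0 : R) <= n%:R by rewrite ler0n.
have h1 : dot x.1.2 x.1.2 <= n%:R * M ^+ 2.
  apply: le_trans (dot_le_norm _) _; apply: ler_wpM2l => //.
  by apply: sqr_le.
have hw : `|2%:R *: x.1.2 - x.1.1| <= 3 * M.
  apply: le_trans (ler_normB _ _) _; rewrite normrZ ger0_norm //.
  lra.
have h2 : dot (2%:R *: x.1.2 - x.1.1) (2%:R *: x.1.2 - x.1.1) <= n%:R * (3 * M) ^+ 2.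
  apply: le_trans (dot_le_norm _) _; apply: ler_wpM2l => //.
  by apply: sqr_le.
have h3 : x.2.2 ^+ 2 <= M ^+ 2.
  by rewrite -real_normK ?num_real //; apply: sqr_le.
have h4 : (2 * x.2.2 - x.2.1) ^+ 2 <= (3 * M) ^+ 2.
  rewrite -real_normK ?num_real //; apply: sqr_le => //.
  apply: le_trans (ler_normB _ _) _; rewrite normrM ger0_norm //.
  lra.
have d0 := dot_ge0 x.1.2.
have q0 : 0 <= x.2.2 ^+ 2 by rewrite sqr_ge0.
have h5 : k * mu * (dot x.1.2 x.1.2 + x.2.2 ^+ 2) <= mu * (dot x.1.2 x.1.2 + x.2.2 ^+ 2).
  rewrite -mulrA ler_piMl //; apply: mulr_ge0; [exact: ltW | lra].
have h6 : mu * (dot x.1.2 x.1.2 + x.2.2 ^+ 2) <= mu * (n%:R * M ^+ 2 + M ^+ 2).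
  apply: ler_wpM2l; [exact: ltW | lra].
rewrite /Vfun. lra.
Qed.

Lemma from_V (R : realType) (n : nat) (k mu W : R) (x : state R n) :
  0 <= k -> 0 < mu -> Vfun k mu x <= W ->
  [/\ `|x.1.2| <= Num.sqrt W, `|x.2.2| <= Num.sqrt W
    & hnorm (2%:R *: x.1.2 - x.1.1) <= Num.sqrt W].
Proof.
move=> k0 mu0; rewrite /Vfun => HV.
have d0 := dot_ge0 x.1.2.
have dw := dot_ge0 (2%:R *: x.1.2 - x.1.1).
have q0 : 0 <= x.2.2 ^+ 2 by rewrite sqr_ge0.
have q1 : 0 <= (2 * x.2.2 - x.2.1) ^+ 2 by rewrite sqr_ge0.
have p0 : 0 <= k * mu * (dot x.1.2 x.1.2 + x.2.2 ^+ 2).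
  by rewrite mulr_ge0 ?mulr_ge0 ?addr_ge0 // ltW.
split.
- apply: le_trans (norm_le_hnorm _) _; apply: ler_wsqrtr; lra.
- rewrite -sqrtr_sqr; apply: ler_wsqrtr; lra.
- apply: ler_wsqrtr; lra.
Qed.

Theorem proposition4 (R : realType) (n : nat) (A : 'M[R]_n) (l0 : R)
  (N : 'rV[R]_n -> 'rV[R]_n) (F : 'rV[R]_n) (gamma : R)
  (Att : R -> set (state R n)) :
  A^T = A ->
  0 < l0 ->
  (forall u : 'rV[R]_n, dot u (app A u) >= l0 * dot u u) ->
  locally_lipschitz N ->
  (forall u : 'rV[R]_n, dot (N u) u = 0) ->
  0 < gamma ->
  (forall k : R, 0 < k <= 1 -> global_attractor (Sk A N F gamma k) (Att k)) ->
  exists C : R, 0 < C /\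
    forall k : R, 0 < k <= 1 ->
      forall x : state R n, Att k x ->
        hnorm (x.1.1 - x.1.2) + `|x.2.1 - x.2.2| <= C * k.
Proof.
move=> _ l00 HA HN _ g0 Hatt.
set mu := Num.min l0 gamma.
have mu0 : 0 < mu by rewrite lt_min l00 g0.
have mul : mu <= l0 by rewrite ge_min lexx.
have mug : mu <= gamma by rewrite ge_min lexx orbT.
set th := mu / (9 + mu).
have th0 : 0 < th by rewrite /th divr_gt0 //; lra.
set K := 2 * dot F F / l0 + 2 * gamma.
have K0 : 0 <= K.
  have : 0 <= 2 * dot F F / l0 by rewrite divr_ge0 ?mulr_ge0 ?dot_ge0 // ltW.
  rewrite /K; lra.
set W := K / th.
set B := Num.sqrt W.
have B0 : 0 <= B by exact: sqrtr_ge0.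
have [L HL] := HN B.
set Gu := 2 * (`|F| + n%:R * (B * `|A^T|) + B * (`|L| * B + `|N 0|)).
set Gq := 2 * (gamma + gamma * B + n%:R * ((`|L| * B + `|N 0|) * B)).
have n0 : (0 : R) <= n%:R by rewrite ler0n.
have t1 : 0 <= n%:R * (B * `|A^T|) by rewrite !mulr_ge0.
have t2 : 0 <= `|L| * B + `|N 0| by rewrite addr_ge0 // mulr_ge0.
have t3 : 0 <= B * (`|L| * B + `|N 0|) by rewrite mulr_ge0.
have t4 : 0 <= n%:R * ((`|L| * B + `|N 0|) * B) by rewrite !mulr_ge0.
have t5 : 0 <= gamma * B by rewrite mulr_ge0 // ltW.
have t6 := normr_ge0 F.
have Gu0 : 0 <= Gu by rewrite /Gu; lra.
have Gq0 : 0 <= Gq by rewrite /Gq; lra.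
have sn0 : 0 <= Num.sqrt (n%:R : R) by exact: sqrtr_ge0.
exists (Num.sqrt n%:R * (Gu / 2) + Gq / 2 + 1); split.
  have : 0 <= Num.sqrt (n%:R : R) * (Gu / 2) by rewrite mulr_ge0 // divr_ge0.
  lra.
move=> k /andP[k0 k1] x Ax.
have [cA [inv att]] := Hatt k (introT andP (conj k0 k1)).
set S := Sk A N F gamma k.
have Sin : forall y, Att k y -> Att k (S y).
  by move=> y Ay; rewrite -inv; exists y.
have Ssurj : forall y, Att k y -> exists z, Att k z /\ S z = y.
  move=> y Ay; have : (S @` Att k)%classic y by rewrite inv.
  by case=> z Az <-; exists z.
have [M [M0 HM]] := @att_bounded R n _ cA.
have spec : forall y : state R n, scheme_eq A N F gamma k y.1.1 y.1.2 y.2.1 y.2.2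
    (S y).1.2 (S y).2.2.
  by move=> y; exact: (@Sk_spec R n A l0 N F gamma k y k0 g0 l00 HA).
have k0' : 0 <= k by exact: ltW.
have EV : forall y, Att k y -> Vfun k mu y <= W.
  have -> : W = (k * K) / (k * th).
    rewrite /W; field; apply/andP; split; first by rewrite gt_eqF.
    by rewrite gt_eqF.
  apply: (@contract_bound R _ (Att k) S (Vfun k mu)).
  - by rewrite mulr_gt0.
  - exists ((10 * n%:R + 10 + mu * (n%:R + 1)) * M ^+ 2) => y Ay.
    have [h1 h2 h3 h4] := HM y Ay.
    exact: Vbound.
  - exact: Ssurj.
  - move=> y Ay.
    exact: (@energy_vec R n A l0 N F gamma k mu _ _ _ _ _ _ k0 k1 l00 g0 mu0 mul mug HA (spec y)).
have BV : forall y, Att k y ->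
    [/\ `|y.1.2| <= B, `|y.2.2| <= B & hnorm (2%:R *: y.1.2 - y.1.1) <= B].
  by move=> y Ay; apply: (@from_V R n k mu W y k0' mu0); exact: EV.
have h00 : hnorm (0 : 'rV[R]_n) <= B.
  by rewrite /hnorm dot0l sqrtr0.
have Du : forall y, Att k y -> `|y.1.2 - y.1.1| <= (k * Gu) / 2.
  apply: (@contract_bound R _ (Att k) S (fun y => `|y.1.2 - y.1.1|)).
  - by [].
  - exists (M + M) => y Ay; have [h1 h2 h3 h4] := HM y Ay.
    by apply: le_trans (ler_normB _ _) _; lra.
  - exact: Ssurj.
  - move=> y Ay.
    have [b1 b2 b3] := BV (S y) (Sin y Ay).
    have [c1 c2 c3] := BV y Ay.
    have HLy := HL _ _ c3 h00.
    have := @delta_u R n A N F gamma k _ _ _ _ _ _ B L k0 B0 (spec y) b1 b2 HLy c3.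
    rewrite /S /Sk /= => h. rewrite /Gu; lra.
have Dq : forall y, Att k y -> `|y.2.2 - y.2.1| <= (k * Gq) / 2.
  apply: (@contract_bound R _ (Att k) S (fun y => `|y.2.2 - y.2.1|)).
  - by [].
  - exists (M + M) => y Ay; have [h1 h2 h3 h4] := HM y Ay.
    by apply: le_trans (ler_normB _ _) _; lra.
  - exact: Ssurj.
  - move=> y Ay.
    have [b1 b2 b3] := BV (S y) (Sin y Ay).
    have [c1 c2 c3] := BV y Ay.
    have HLy := HL _ _ c3 h00.
    have := @delta_q R n A N F gamma k _ _ _ _ _ _ B L k0 B0 g0 (spec y) b1 b2 HLy c3.
    rewrite /S /Sk /= => h. rewrite /Gq; lra.
have hx1 := Du x Ax.
have hx2 := Dq x Ax.
have hh := hnorm_le_norm (x.1.1 - x.1.2).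
rewrite distrC in hh.
have hh2 := ler_wpM2l sn0 hx1.
rewrite distrC.
lra.
Qed.
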